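(* For every $n\ge 2$, the tropicalization of the Cayley-Menger variety of $n$ points in $\mathbb{R}^1$ is the set of ultrametrics on $[n]$: $\mathrm{trop}(\mathrm{CM}_n^1)=U_n$.
   Context: Coordinates of $\mathbb{C}^{\binom{[n]}{2}}$ are indexed by pairs $uv$, $u<v$. $\mathrm{CM}_n^1\subseteq\mathbb{C}^{\binom{[n]}{2}}$ is the Zariski closure of $\{((x_u-x_v)^2)_{u<v}: x_1,\dots,x_n\in\mathbb{R}\}$. Tropicalization uses the max convention: with $K=\mathbb{C}\{\!\{t\}\!\}$ the complex Puiseux series field and $\mathrm{val}(a)=-(\text{smallest exponent of }t\text{ in }a)$, for $X\subseteq\mathbb{C}^S$ with ideal $I$, $\mathrm{trop}(X)$ is the Euclidean closure of $\{(\mathrm{val}(x_i))_{i}: x\in V_K(I)\}\cap\mathbb{R}^S$. $\delta\in\mathbb{R}^{\binom{[n]}{2}}$ is an ultrametric if $\delta_{uv}\le\max\{\delta_{uw},\delta_{vw}\}$ for all distinct $u,v,w\in[n]$ (no nonnegativity required); $U_n$ is the set of ultrametrics. *)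

(* Defs.v *)
From HB Require Import structures.
From mathcomp Require Import all_boot all_order all_algebra.
From mathcomp Require Import boolp classical_sets fsbigop reals.
From mathcomp Require Import complex.
Set Implicit Arguments. Unset Strict Implicit. Unset Printing Implicit Defensive.
Import Order.TTheory GRing.Theory Num.Theory.
Local Open Scope ring_scope.
Local Open Scope classical_set_scope.

Section CM.
Variable R : realType.
Local Notation C := (R[i]).

(* index set binom([n],2): pairs (u,v) with u < v *)
Definition pairs (n : nat) := {p : 'I_n * 'I_n | (p.1 < p.2)%N}.

(* Polynomials in C[y_s : s in pairs n], as finite lists of terms
   (coefficient, exponent vector). *)
Definition cpoly (n : nat) := seq (C * (pairs n -> nat)).

Definition evalC n (p : cpoly n) (y : pairs n -> C) : C :=
  \sum_(t <- p) t.1 * \prod_(s : pairs n) y s ^+ t.2 s.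

Definition cm_point n (x : 'I_n -> R) : pairs n -> C :=
  fun s => ((x (val s).1 - x (val s).2) ^+ 2)%:C%C.

Definition vanishing_ideal n (A : set (pairs n -> C)) : set (cpoly n) :=
  [set p | forall y, A y -> evalC p y = 0].

Definition zero_locusC n (I : set (cpoly n)) : set (pairs n -> C) :=
  [set y | forall p, I p -> evalC p y = 0].

(* CM_n^1 : the Zariski closure of the image of x |-> ((x_u-x_v)^2) *)
Definition CM n : set (pairs n -> C) :=
  zero_locusC (vanishing_ideal [set cm_point x | x in [set: 'I_n -> R]]).

(* ---- Puiseux series C{{t}} : functions rat -> C (coefficient of t^q)
   whose support lies in (1/N)Z and is bounded below. *)
Definition puiseux (a : rat -> C) : Prop :=
  exists N : nat, (0 < N)%N /\ exists m : rat,
    forall q, a q != 0 -> m <= q /\ exists z : int, q = z%:~R / N%:R.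

Definition constK (c : C) : rat -> C := fun q => if q == 0 then c else 0.
Definition zeroK : rat -> C := constK 0.
Definition oneK : rat -> C := constK 1.
Definition addPS (a b : rat -> C) : rat -> C := fun q => a q + b q.
(* Cauchy product (the sum has finite support when a, b are Puiseux) *)
Definition mulPS (a b : rat -> C) : rat -> C :=
  fun q => (\sum_(r \in [set: rat]) a r * b (q - r))%R.
Definition powPS (a : rat -> C) (k : nat) : rat -> C := iter k (mulPS a) oneK.

Definition evalK n (p : cpoly n) (x : pairs n -> rat -> C) : rat -> C :=
  foldr (fun t acc =>
     addPS (mulPS (constK t.1)
                (foldr (fun s acc' => mulPS (powPS (x s) (t.2 s)) acc') oneK
                       (enum [pred s : pairs n | true]))) acc) zeroK p.

Definition zero_locusK n (I : set (cpoly n)) : set (pairs n -> rat -> C) :=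
  [set x | (forall s, puiseux (x s)) /\ forall p, I p -> evalK p x = zeroK].

(* a <> 0 and q is the smallest exponent of t occurring in a;
   then val(a) = - q (max convention) *)
Definition lowest_exp (a : rat -> C) (q : rat) : Prop :=
  a q != 0 /\ forall r, a r != 0 -> q <= r.

(* trop(X) for X with ideal I: Euclidean closure in R^S of the set of
   valuation vectors of points of V_K(I) with all coordinates nonzero *)
Definition trop_pts n (I : set (cpoly n)) : set (pairs n -> R) :=
  [set d | exists x, zero_locusK I x /\ exists w : pairs n -> rat,
      (forall s, lowest_exp (x s) (- w s)) /\ forall s, d s = ratr (w s)].

Definition euclid_closure n (A : set (pairs n -> R)) : set (pairs n -> R) :=
  [set d | forall e : R, 0 < e -> exists d', A d' /\ forall s, `|d s - d' s| < e].

Definition trop n (X : set (pairs n -> C)) : set (pairs n -> R) :=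
  euclid_closure (trop_pts (vanishing_ideal X)).

Definition dcoord n (d : pairs n -> R) (u v : 'I_n) : R :=
  match @insub _ (fun p : 'I_n * 'I_n => (p.1 < p.2)%N) (pairs n)
           (if (u < v)%N then (u, v) else (v, u)) with
  | Some s => d s | None => 0 end.

Definition ultrametric n (d : pairs n -> R) : Prop :=
  forall u v w : 'I_n, u != v -> u != w -> v != w ->
    dcoord d u v <= Num.max (dcoord d u w) (dcoord d v w).

Definition U n : set (pairs n -> R) := [set d | ultrametric d].

End CM.

(* Main.v *)
Require Import Defs.
From HB Require Import structures.
From mathcomp Require Import all_boot all_order all_algebra.
From mathcomp Require Import boolp classical_sets fsbigop reals.
From mathcomp Require Import complex.
From mathcomp Require Import ring lra zify.
Set Implicit Arguments. Unset Strict Implicit. Unset Printing Implicit Defensive.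
Import Order.TTheory GRing.Theory Num.Theory.
Local Open Scope ring_scope.
Local Open Scope classical_set_scope.

Definition LBc (R : realType) (a : rat -> R[i]) (q : rat) (c : R[i]) :=
  (forall r, a r != 0 -> q <= r) /\ a q = c.

Lemma mulPS_LB (R : realType) (a b : rat -> R[i]) qa qb ca cb :
  LBc a qa ca -> LBc b qb cb -> LBc (mulPS a b) (qa + qb) (ca * cb).
Proof.
move=> [Ha Hqa] [Hb Hqb]; split.
  move=> r; apply: contraR; rewrite -ltNge => Hr.
  rewrite /mulPS fsbig1 // => i _.
  have [/eqP ->|/Ha Hi] := boolP (a i == 0); first by rewrite mul0r.
  have [/eqP ->|/Hb Hi2] := boolP (b (r - i) == 0); first by rewrite mulr0.
  by move: (lerD Hi Hi2); rewrite addrCA subrr addr0 => /(lt_le_trans Hr); rewrite ltxx.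
rewrite /mulPS -(fsbig_widen [set qa] [set: rat]) //.
  by rewrite fsbig_set1 addrAC subrr add0r Hqa Hqb.
move=> i [_ /= Hi]; rewrite /preimage /=.
have [/eqP ->|/Ha Hi1] := boolP (a i == 0); first by rewrite mul0r.
have [/eqP ->|/Hb Hi2] := boolP (b (qa + qb - i) == 0); first by rewrite mulr0.
exfalso; move: Hi2; rewrite lerBrDr addrC lerD2r => Hi2; apply: Hi.
by apply/eqP; rewrite eq_le Hi1 Hi2.
Qed.

Lemma constK_LB (R : realType) (c : R[i]) : LBc (constK c) 0 c.
Proof.
split; last by rewrite /constK eqxx.
move=> r; rewrite /constK; case: (r =P 0) => [->|_] //; by rewrite eqxx.
Qed.

Lemma powPS_LB (R : realType) (a : rat -> R[i]) q c k :
  LBc a q c -> LBc (powPS a k) (q *+ k) (c ^+ k).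
Proof.
move=> H; elim: k => [|k IH].
  rewrite mulr0n expr0; exact: constK_LB.
rewrite /powPS iterS -/(powPS a k) mulrS exprS; exact: mulPS_LB.
Qed.

Definition monoprodK (R : realType) n (x : pairs n -> rat -> R[i]) (e : pairs n -> nat)
  (L : seq (pairs n)) :=
  foldr (fun s acc => mulPS (powPS (x s) (e s)) acc) (@oneK R) L.

Lemma fprod_LB (R : realType) n (x : pairs n -> rat -> R[i]) e L q c :
  (forall s, LBc (x s) (q s) (c s)) ->
  LBc (monoprodK x e L) (\sum_(s <- L) q s *+ e s) (\prod_(s <- L) c s ^+ e s).
Proof.
move=> H; elim: L => [|s L IH]; first by rewrite !big_nil; exact: constK_LB.
rewrite /= !big_cons; apply: mulPS_LB => //; exact: powPS_LB.
Qed.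

Definition termK (R : realType) n (x : pairs n -> rat -> R[i]) (t : R[i] * (pairs n -> nat)) :=
  mulPS (constK t.1) (monoprodK x t.2 (enum [pred s : pairs n | true])).

Lemma evalK_sum (R : realType) n (p : cpoly R n) x r :
  evalK p x r = \sum_(t <- p) termK x t r.
Proof.
elim: p => [|t p IH]; first by rewrite big_nil /evalK /= /zeroK /constK; case: ifP.
by rewrite big_cons -IH.
Qed.

Lemma termK_LB (R : realType) n (x : pairs n -> rat -> R[i]) q c t :
  (forall s, LBc (x s) (q s) (c s)) ->
  LBc (termK x t) (\sum_(s : pairs n) q s *+ t.2 s) (t.1 * \prod_(s : pairs n) c s ^+ t.2 s).
Proof.
move=> H; have := mulPS_LB (constK_LB t.1) (fprod_LB t.2 (enum [pred s : pairs n | true]) H).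
by rewrite add0r !big_enum.
Qed.

Definition spair n (u v : 'I_n) : 'I_n * 'I_n := if (u < v)%N then (u, v) else (v, u).

Lemma dcoordP n (u v : 'I_n) : u != v -> exists s : pairs n,
  val s = spair u v /\ forall (R : realType) (d : pairs n -> R), dcoord d u v = d s.
Proof.
move=> Huv; rewrite /dcoord -/(spair u v).
case: insubP => [s _ Hs|H].
  by exists s.
exfalso; move: H; rewrite /spair; case: ifP => /= Hlt; first by rewrite Hlt.
move=> Hvu; move/negP: Huv; apply.
by rewrite -val_eqE /= eqn_leq leqNgt Hvu /= leqNgt Hlt.
Qed.

Lemma dcoordC (R : realType) n (d : pairs n -> R) u v : dcoord d u v = dcoord d v u.
Proof.
rewrite /dcoord; case: (ltngtP u v) => [//|//|H].
by rewrite (ord_inj H).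
Qed.

Lemma spair_mem n (u v x : 'I_n) (s : pairs n) : val s = spair u v ->
  ((x == (val s).1) || (x == (val s).2)) = ((x == u) || (x == v)).
Proof. by move=> ->; rewrite /spair; case: ifP => //= _; rewrite orbC. Qed.

Lemma cm_point_spair (R : realType) n (x : 'I_n -> R) (u v : 'I_n) (s : pairs n) :
  val s = spair u v -> cm_point x s = ((x u - x v) ^+ 2)%:C%C.
Proof.
move=> Hs; rewrite /cm_point Hs /spair; case: ifP => //= _.
by rewrite -opprB sqrrN.
Qed.

Definition mono n (a : pairs n) (i : nat) (b : pairs n) (j : nat) : pairs n -> nat :=
  fun s => ((s == a) * i + (s == b) * j)%N.

Lemma sum_mono n (q : pairs n -> rat) a i b j :
  \sum_(s : pairs n) q s *+ mono a i b j s = q a *+ i + q b *+ j.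
Proof.
rewrite /mono; under eq_bigr do rewrite mulrnDr.
rewrite big_split /=; congr (_ + _).
  rewrite (bigD1 a) //= eqxx mul1n big1 ?addr0 // => s /negbTE ->; by rewrite mul0n mulr0n.
rewrite (bigD1 b) //= eqxx mul1n big1 ?addr0 // => s /negbTE ->; by rewrite mul0n mulr0n.
Qed.

Lemma prod_mono (R : realType) n (c : pairs n -> R[i]) a i b j :
  \prod_(s : pairs n) c s ^+ mono a i b j s = c a ^+ i * c b ^+ j.
Proof.
rewrite /mono; under eq_bigr do rewrite exprD.
rewrite big_split /=; congr (_ * _).
  rewrite (bigD1 a) //= eqxx mul1n big1 ?mulr1 // => s /negbTE ->; by rewrite mul0n expr0.
rewrite (bigD1 b) //= eqxx mul1n big1 ?mulr1 // => s /negbTE ->; by rewrite mul0n expr0.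
Qed.

Lemma termK_lt (R : realType) n (x : pairs n -> rat -> R[i]) q c c0 a i b j r :
  (forall s, LBc (x s) (q s) (c s)) -> r < q a *+ i + q b *+ j ->
  termK x (c0, mono a i b j) r = 0.
Proof.
move=> H Hr; have [H1 _] := termK_LB (c0, mono a i b j) H.
apply/eqP; apply: contraLR Hr => /H1; rewrite sum_mono => Hle.
by rewrite -leNgt.
Qed.

Lemma termK_eq (R : realType) n (x : pairs n -> rat -> R[i]) q c c0 a i b j :
  (forall s, LBc (x s) (q s) (c s)) ->
  termK x (c0, mono a i b j) (q a *+ i + q b *+ j) = c0 * (c a ^+ i * c b ^+ j).
Proof.
move=> H; have [_ H2] := termK_LB (c0, mono a i b j) H.
by move: H2; rewrite sum_mono prod_mono.
Qed.


Definition fCM (R : realType) n (s1 s2 s3 : pairs n) : cpoly R n :=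
  [:: (1, mono s1 2 s1 0); (1, mono s2 2 s2 0); (1, mono s3 2 s3 0);
      (-2, mono s1 1 s2 1); (-2, mono s1 1 s3 1); (-2, mono s2 1 s3 1)].

Lemma fCM_van (R : realType) n (u v z : 'I_n) (s1 s2 s3 : pairs n) :
  val s1 = spair u v -> val s2 = spair u z -> val s3 = spair v z ->
  vanishing_ideal (@CM R n) (fCM R s1 s2 s3).
Proof.
move=> H1 H2 H3 y Hy; apply: Hy => _ [x _ <-].
rewrite /evalC /fCM !big_cons big_nil !prod_mono.
rewrite (cm_point_spair x H1) (cm_point_spair x H2) (cm_point_spair x H3).
rewrite !rmorphXn !rmorphB /=.
set a := (x u)%:C%C; set b := (x v)%:C%C; set c := (x z)%:C%C.
ring.
Qed.

Lemma trop_pts_ultra (R : realType) n (d : pairs n -> R) :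
  trop_pts (vanishing_ideal (@CM R n)) d -> ultrametric d.
Proof.
move=> [x [[_ HI] [w [Hw Hd]]]] u v z Huv Huz Hvz.
have [s1 [H1 D1]] := dcoordP Huv.
have [s2 [H2 D2]] := dcoordP Huz.
have [s3 [H3 D3]] := dcoordP Hvz.
rewrite D1 D2 D3 !Hd leNgt gt_max !ltr_rat; apply/negP => /andP[h2 h3].
pose q s := - w s; pose c s := x s (q s).
have HL : forall s, LBc (x s) (q s) (c s).
  by move=> s; split => //; case: (Hw s).
have Hc1 : c s1 != 0 by case: (Hw s1).
have := HI _ (fCM_van H1 H2 H3).
move=> /(congr1 (fun g => g (q s1 *+ 2 + q s1 *+ 0))).
rewrite evalK_sum /fCM !big_cons big_nil.
have Tlt := fun c0 a i b j r => @termK_lt R n x q c c0 a i b j r HL.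
rewrite (termK_eq _ _ _ _ _ HL).
rewrite Tlt; last by rewrite /q; lra.
rewrite Tlt; last by rewrite /q; lra.
rewrite Tlt; last by rewrite /q; lra.
rewrite Tlt; last by rewrite /q; lra.
rewrite Tlt; last by rewrite /q; lra.
rewrite /zeroK /constK; case: ifP => _; rewrite !addr0 expr0 !mulr1 mul1r => /eqP;
  by rewrite sqrf_eq0 (negbTE Hc1).
Qed.

Lemma closure_ultra (R : realType) n (A : set (pairs n -> R)) (d : pairs n -> R) :
  (forall d, A d -> ultrametric d) -> euclid_closure A d -> ultrametric d.
Proof.
move=> HA Hd u v z Huv Huz Hvz.
have [s1 [H1 D1]] := dcoordP Huv.
have [s2 [H2 D2]] := dcoordP Huz.
have [s3 [H3 D3]] := dcoordP Hvz.
rewrite D1 D2 D3 leNgt gt_max; apply/negP => /andP[h2 h3].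
pose e := Num.min ((d s1 - d s2) / 2) ((d s1 - d s3) / 2).
have He : 0 < e by rewrite lt_min; apply/andP; split; lra.
have [e2 e3] : e <= (d s1 - d s2) / 2 /\ e <= (d s1 - d s3) / 2.
  by have := lexx e; rewrite {2}/e le_min => /andP[].
have [d' [Ad' Hd']] := Hd e He.
have := HA d' Ad' u v z Huv Huz Hvz; rewrite D1 D2 D3 le_max.
have := Hd' s1; have := Hd' s2; have := Hd' s3; rewrite !ltr_norml.
move=> /andP[a1 a2] /andP[b1 b2] /andP[c1 c2] /orP[] h; clear -h a1 a2 b1 b2 c1 c2 e2 e3; lra.
Qed.

Lemma trop_sub_U (R : realType) n : trop (@CM R n) `<=` @U R n.
Proof. move=> d Hd; apply: (closure_ultra (@trop_pts_ultra R n) Hd). Qed.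


Definition eD (D c k : nat) : rat := (k%:R - c%:R) / D%:R.

Definition phi (R : realType) (D c : nat) (P : {poly R[i]}) : rat -> R[i] :=
  fun q => if (q * D%:R + c%:R) \is a Num.nat then P`_(Num.trunc (q * D%:R + c%:R)) else 0.

Lemma eD_z D c k : (0 < D)%N -> eD D c k * D%:R + c%:R = k%:R.
Proof.
move=> hD; have hD' : (D%:R : rat) != 0 by rewrite pnatr_eq0 -lt0n.
by rewrite /eD divfK // subrK.
Qed.

Lemma phi_eD (R : realType) D c k (P : {poly R[i]}) : (0 < D)%N ->
  phi D c P (eD D c k) = P`_k.
Proof. by move=> hD; rewrite /phi eD_z // natr_nat natrK. Qed.

Lemma eD_inj D c k k' : (0 < D)%N -> eD D c k = eD D c k' -> k = k'.
Proof.
move=> hD /(congr1 (fun q => q * D%:R + c%:R)); rewrite !eD_z //.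
by move/eqP; rewrite eqr_nat => /eqP.
Qed.

Lemma phi0 (R : realType) D c (P : {poly R[i]}) q : (0 < D)%N ->
  (forall k, q != eD D c k) -> phi D c P q = 0.
Proof.
move=> hD Hq; rewrite /phi; case: ifP => // Hn; exfalso.
have := Hq (Num.trunc (q * D%:R + c%:R)); rewrite /eD truncnK //.
have hD' : (D%:R : rat) != 0 by rewrite pnatr_eq0 -lt0n.
by rewrite addrK mulfK // eqxx.
Qed.

Lemma phi_cases (R : realType) D c (P : {poly R[i]}) q : (0 < D)%N ->
  (exists k, q = eD D c k) \/ phi D c P q = 0.
Proof.
move=> hD; case: (pselect (exists k, q = eD D c k)) => [|H]; first by left.
right; apply: phi0 => // k; apply/eqP => Hk; apply: H; by exists k.
Qed.

Lemma eD_add D c d k j : (0 < D)%N -> eD D c k + eD D d j = eD D (c + d) (k + j).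
Proof. by move=> hD; rewrite /eD -mulrDl !natrD; congr (_ / _); ring. Qed.

Lemma eD_le D c k j : (0 < D)%N -> (k <= j)%N -> eD D c k <= eD D c j.
Proof.
move=> hD hkj; rewrite /eD ler_pM2r ?invr_gt0 ?ltr0n // lerD2r ler_nat //.
Qed.

Lemma phi_add (R : realType) D c (P Q : {poly R[i]}) :
  addPS (phi D c P) (phi D c Q) = phi D c (P + Q).
Proof. by apply/funext => q; rewrite /addPS /phi; case: ifP => _; rewrite ?coefD ?addr0. Qed.

Lemma phi_poly0 (R : realType) D c : phi D c (0 : {poly R[i]}) = @zeroK R.
Proof. by apply/funext => q; rewrite /phi /zeroK /constK coef0; case: ifP; case: ifP. Qed.

Lemma phi_shift (R : realType) D c m (P : {poly R[i]}) : (0 < D)%N ->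
  phi D c P = phi D (c + m) ('X^m * P).
Proof.
move=> hD; apply/funext => q.
case: (pselect (exists k, q = eD D c k)) => [[k ->]|H].
  rewrite phi_eD //.
  have -> : eD D c k = eD D (c + m) (k + m).
    by rewrite /eD !natrD opprD addrACA subrr addr0.
  by rewrite phi_eD // coefXnM ltnNge leq_addl /= addnK.
rewrite phi0 //; last by move=> k; apply/eqP => Hk; apply: H; exists k.
case: (phi_cases (c + m) ('X^m * P) q hD) => [[j Hj]|->] //.
rewrite Hj phi_eD // coefXnM; case: ltnP => //= hmj.
exfalso; apply: H; exists (j - m)%N; rewrite Hj.
by rewrite /eD natrB // natrD opprD addrA addrAC.
Qed.

Lemma sum_nat_widen (V : zmodType) a b (F : nat -> V) : (a <= b)%N ->
  (forall k, (a <= k < b)%N -> F k = 0) ->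
  \sum_(0 <= k < a) F k = \sum_(0 <= k < b) F k.
Proof.
move=> hab H; rewrite (@big_cat_nat _ _ _ a 0 b) //= [X in _ = _ + X]big_nat_cond.
by rewrite [X in _ = _ + X]big1 ?addr0 // => k /andP[hk _]; apply: H.
Qed.

Lemma eD_sub D c d k m : (0 < D)%N -> (k <= m)%N ->
  eD D (c + d) m - eD D c k = eD D d (m - k).
Proof.
move=> hD hkm; rewrite -[m in eD _ (c + d) m](subnKC hkm) -eD_add //.
by rewrite addrAC subrr add0r.
Qed.

Lemma phi_const (R : realType) D (c0 : R[i]) : (0 < D)%N -> constK c0 = phi D 0 c0%:P.
Proof.
move=> hD; apply/funext => q; rewrite /constK.
case: (q =P 0) => [->|Hq].
  have -> : (0 : rat) = eD D 0 0 by rewrite /eD subrr mul0r.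
  by rewrite phi_eD // coefC.
case: (phi_cases 0 c0%:P q hD) => [[k Hk]|->] //.
rewrite Hk phi_eD // coefC; case: (k =P 0%N) => // Hk0; exfalso; apply: Hq.
by rewrite Hk Hk0 /eD subrr mul0r.
Qed.

Lemma phi_mul (R : realType) D c d (P Q : {poly R[i]}) : (0 < D)%N ->
  mulPS (phi D c P) (phi D d Q) = phi D (c + d) (P * Q).
Proof.
move=> hD; apply/funext => q; rewrite /mulPS.
rewrite fsbig_supp (fsbig_fwiden (map (eD D c) (iota 0 (size P)))) //; first last.
- move=> r [_ H]; rewrite /preimage /=; apply: contrapT => H'; apply: H; by split.
- by rewrite map_inj_uniq ?iota_uniq // => k k'; apply: eD_inj.
- move=> r [_]; rewrite /preimage /= => Hr.
  case: (phi_cases c P r hD) => [[k Hk]|H0]; last by exfalso; apply: Hr; rewrite H0 mul0r.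
  move: Hr; rewrite Hk phi_eD // => Hr; rewrite /= map_f // mem_iota /= add0n.
  rewrite ltnNge; apply/negP => Hk'; apply: Hr; by rewrite nth_default ?mul0r.
rewrite big_map.
under eq_bigr do rewrite phi_eD //.
case: (pselect (exists m, q = eD D (c + d) m)) => [[m ->]|H].
  pose G k := if (k <= m)%N then P`_k * Q`_(m - k) else 0.
  transitivity (\sum_(k <- iota 0 (size P)) G k).
    apply: eq_bigr => k _; rewrite /G; case: ifP => hkm.
      by rewrite eD_sub // phi_eD.
    rewrite phi0 ?mulr0 // => j; apply/eqP => Hj.
    have : eD D (c + d) m = eD D (c + d) (k + j) by rewrite -eD_add // -Hj addrC subrK.
    move/eD_inj => /(_ hD) Hm; move: hkm; by rewrite Hm leq_addr.
  rewrite phi_eD // coefM.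
  have -> : iota 0 (size P) = index_iota 0 (size P) by rewrite /index_iota subn0.
  rewrite (@sum_nat_widen _ (size P) (size P + m.+1)) ?leq_addr //; last first.
    by move=> k /andP[hk _]; rewrite /G nth_default // mul0r; case: ifP.
  rewrite -(@sum_nat_widen _ m.+1 (size P + m.+1)) ?leq_addl //; last first.
    by move=> k /andP[hk _]; rewrite /G leqNgt hk.
  rewrite big_mkord; apply: eq_bigr => k _; by rewrite /G -ltnS ltn_ord.
rewrite phi0 //; last by move=> m; apply/eqP => Hm; apply: H; exists m.
apply: big1 => k _; rewrite phi0 ?mulr0 // => j; apply/eqP => Hj; apply: H.
by exists (k + j)%N; rewrite -eD_add // -Hj addrC subrK.
Qed.

Lemma phi_pow (R : realType) D c (P : {poly R[i]}) k : (0 < D)%N ->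
  powPS (phi D c P) k = phi D (c * k) (P ^+ k).
Proof.
move=> hD; elim: k => [|k IH]; first by rewrite muln0 expr0 /powPS /= /oneK (@phi_const R D 1 hD).
by rewrite /powPS iterS -/(powPS _ k) IH phi_mul // mulnS exprS.
Qed.


Lemma fprod_phi (R : realType) D n (y : pairs n -> rat -> R[i]) (cc : nat)
    (Y : pairs n -> {poly R[i]}) e L : (0 < D)%N ->
  (forall s, y s = phi D cc (Y s)) ->
  @monoprodK R n y e L = phi D (\sum_(s <- L) cc * e s)%N (\prod_(s <- L) Y s ^+ e s).
Proof.
move=> hD Hy; elim: L => [|s L IH].
  by rewrite !big_nil /monoprodK /= /oneK (@phi_const R D 1 hD).
rewrite /monoprodK /= -/(@monoprodK R n y e L) IH Hy phi_pow // phi_mul //.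
by rewrite !big_cons.
Qed.

Definition degc n (cc : nat) (t : pairs n -> nat) : nat := (\sum_(s : pairs n) cc * t s)%N.

Lemma termK_phi (R : realType) D n (y : pairs n -> rat -> R[i]) (cc : nat)
    (Y : pairs n -> {poly R[i]}) t : (0 < D)%N ->
  (forall s, y s = phi D cc (Y s)) ->
  termK y t = phi D (degc cc t.2) (t.1%:P * \prod_(s : pairs n) Y s ^+ t.2 s).
Proof.
move=> hD Hy; rewrite /termK (fprod_phi _ _ hD Hy) (@phi_const R D t.1 hD) phi_mul //.
by rewrite add0n !big_enum.
Qed.

Definition Qpoly (R : realType) n (Y : pairs n -> {poly R[i]}) (cc G : nat) (p : cpoly R n) :=
  \sum_(t <- p) 'X^(G - degc cc t.2) * (t.1%:P * \prod_(s : pairs n) Y s ^+ t.2 s).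

Lemma evalK_phi (R : realType) D n (y : pairs n -> rat -> R[i]) (cc : nat)
    (Y : pairs n -> {poly R[i]}) (p : cpoly R n) G : (0 < D)%N ->
  (forall s, y s = phi D cc (Y s)) ->
  all (fun t => degc cc t.2 <= G)%N p ->
  evalK p y = phi D G (Qpoly Y cc G p).
Proof.
move=> hD Hy; elim: p => [|t p IH]; first by rewrite /Qpoly big_nil phi_poly0.
move=> /= /andP[Ht Hp]; rewrite -/(evalK p y) IH // -/(termK y t).
rewrite (termK_phi _ hD Hy) (@phi_shift R D (degc cc t.2) (G - degc cc t.2) _ hD) subnKC //.
by rewrite phi_add /Qpoly big_cons.
Qed.

Lemma all_le_sum (T : Type) (f : T -> nat) (p : seq T) :
  all (fun t => f t <= \sum_(t' <- p) f t')%N p.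
Proof.
elim: p => [|t p IH] //=; rewrite big_cons leq_addr /=.
by apply: sub_all IH => t' /= H; apply: leq_trans H (leq_addl _ _).
Qed.

Lemma Qpoly_horner (R : realType) n (Y : pairs n -> {poly R[i]}) (M G : nat) (p : cpoly R n)
   (z : R[i]) (yv : pairs n -> R[i]) :
  (forall s, (Y s).[z] = yv s * z ^+ (2 * M)) ->
  all (fun t => degc (2 * M) t.2 <= G)%N p ->
  (Qpoly Y (2 * M) G p).[z] = z ^+ G * evalC p yv.
Proof.
move=> HY; elim: p => [|t p IH]; first by rewrite /Qpoly /evalC !big_nil horner0 mulr0.
move=> /= /andP[Ht Hp]; rewrite /Qpoly /evalC !big_cons hornerD -/(Qpoly Y (2 * M) G p).
rewrite IH // /evalC mulrDr; congr (_ + _).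
rewrite hornerM hornerXn hornerM hornerC horner_prod.
under eq_bigr do rewrite horner_exp HY exprMn.
rewrite big_split /= prodrXr -exprM.
have -> : (2 * M * \sum_(s : pairs n) t.2 s)%N = degc (2 * M) t.2.
  by rewrite /degc big_distrr.
rewrite -[in RHS](subnK Ht) exprD; ring.
Qed.

Definition Yof (R : realType) n (Pr : 'I_n -> {poly R}) (s : pairs n) : {poly R[i]} :=
  map_poly (real_complex R) (Pr (val s).1 - Pr (val s).2) *
  map_poly (real_complex R) (Pr (val s).1 - Pr (val s).2).

Lemma image_in_CM (R : realType) n (x : 'I_n -> R) (p : cpoly R n) :
  vanishing_ideal (@CM R n) p -> evalC p (cm_point x) = 0.
Proof. by move=> Hp; apply: Hp => p' Hp'; apply: Hp'; exists x. Qed.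

Lemma Yof_horner (R : realType) n (Pr : 'I_n -> {poly R}) (M : nat) (tau : R) (s : pairs n) :
  tau != 0 ->
  (Yof Pr s).[tau%:C%C] =
    cm_point (fun u => (Pr u).[tau] / tau ^+ M) s * (tau%:C%C) ^+ (2 * M).
Proof.
move=> ht; rewrite /Yof hornerM horner_map /cm_point -!rmorphXn -!rmorphM /=.
congr (_%:C%C); rewrite hornerD hornerN.
have hT : tau ^+ M != 0 by rewrite expf_neq0.
rewrite mulnC exprM.
set T := tau ^+ M; set a := (Pr (val s).1).[tau]; set b := (Pr (val s).2).[tau].
by field.
Qed.

Lemma Qpoly_zero (R : realType) n (Pr : 'I_n -> {poly R}) (M G : nat) (p : cpoly R n) :
  vanishing_ideal (@CM R n) p -> all (fun t => degc (2 * M) t.2 <= G)%N p ->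
  Qpoly (Yof Pr) (2 * M) G p = 0.
Proof.
move=> Hp Hall; apply/eqP; apply: contraT => HQ.
pose f (k : nat) : R[i] := ((k.+1)%:R : R)%:C%C.
have := @max_poly_roots _ _ [seq f k | k <- iota 0 (size (Qpoly (Yof Pr) (2 * M) G p))] HQ.
rewrite size_map size_iota ltnn; apply.
  apply/allP => z /mapP [k _ ->]; rewrite /root.
  have hk : ((k.+1)%:R : R) != 0 by rewrite pnatr_eq0.
  rewrite (Qpoly_horner (yv := cm_point (fun u => (Pr u).[(k.+1)%:R] / ((k.+1)%:R) ^+ M)) _ Hall).
    by rewrite image_in_CM // mulr0.
  by move=> s; rewrite /f (@Yof_horner R n Pr M).
rewrite map_inj_uniq ?iota_uniq // => k k' /complexI /eqP.
by rewrite eqr_nat eqSS => /eqP.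
Qed.


Lemma phi_LB (R : realType) D c (P : {poly R[i]}) k : (0 < D)%N ->
  (forall i, (i < k)%N -> P`_i = 0) -> LBc (phi D c P) (eD D c k) (P`_k).
Proof.
move=> hD H; split; last exact: phi_eD.
move=> r Hr; case: (phi_cases c P r hD) => [[j Hj]|H0]; last by rewrite H0 eqxx in Hr.
rewrite Hj; apply: eD_le => //; rewrite leqNgt; apply/negP => hj.
by move: Hr; rewrite Hj phi_eD // (H j hj) eqxx.
Qed.

Lemma phi_puiseux (R : realType) D c (P : {poly R[i]}) : (0 < D)%N -> puiseux (phi D c P).
Proof.
move=> hD; exists D; split => //; exists (eD D c 0) => q Hq.
case: (phi_cases c P q hD) => [[k ->]|H0]; last by rewrite H0 eqxx in Hq.
split; first exact: eD_le.
by exists (k%:Z - c%:Z); rewrite /eD intrB.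
Qed.

Lemma rep_spec (T : finType) (r : rel T) :
  (forall x, r x x) -> (forall x y, r x y -> r y x) ->
  (forall x y z, r x y -> r y z -> r x z) ->
  forall u v, (odflt u [pick w | r u w] == odflt v [pick w | r v w]) = r u v.
Proof.
move=> Hrefl Hsym Htrans.
have Hrep u : r u (odflt u [pick w | r u w]) by case: pickP => [w Hw|_] //=.
move=> u v; apply/eqP/idP.
  by move=> E; apply: (Htrans _ _ _ (Hrep u)); rewrite E; apply: Hsym; apply: Hrep.
move=> Huv.
have E : [pick w | r u w] = [pick w | r v w].
  apply: eq_pick => w; apply/idP/idP => H; [exact: Htrans (Hsym _ _ Huv) H | exact: Htrans Huv H].
rewrite E; case: pickP => [w _ //|H].
by have := H v; rewrite Hrefl.
Qed.

Lemma U_sub_trop (R : realType) n (d : pairs n -> R) : ultrametric d -> trop (@CM R n) d.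
Proof.
move=> Hd e he.
pose N := (Num.trunc e^-1).+1.
have hN : (0 < N)%N by [].
have hN2 : (0 < 2 * N)%N by rewrite muln_gt0.
have heN : 1 < e * N%:R.
  by have := truncnS_gt e^-1; rewrite -/N -div1r ltr_pdivrMr // mulrC.
pose z (s : pairs n) : int := Num.floor (N%:R * d s).
pose M : nat := (\sum_(s : pairs n) `|z s|)%N.
have hzM s : (`|z s| <= M)%N by rewrite /M (bigD1 s) //= leq_addr.
pose zz (u v : 'I_n) : int := Num.floor (N%:R * dcoord d u v).
have zzC u v : zz u v = zz v u by rewrite /zz dcoordC.
have zzs u v (s : pairs n) : val s = spair u v -> u != v -> zz u v = z s.
  move=> Hs Huv; have [s' [Hs' D']] := dcoordP Huv.
  have -> : s = s' by apply: val_inj; rewrite Hs Hs'.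
  by rewrite /zz D'.
pose Rel (L : nat) : rel 'I_n := fun u v => (u == v) || (zz u v <= M%:Z - L%:Z).
have Hrefl L u : Rel L u u by rewrite /Rel eqxx.
have Hsym L u v : Rel L u v -> Rel L v u by rewrite /Rel eq_sym zzC.
have Htr L u w v : Rel L u w -> Rel L w v -> Rel L u v.
  rewrite /Rel; case: (eqVneq u w) => [->|huw] //=.
  case: (eqVneq w v) => [<-|hwv]; first by move=> h _; rewrite h orbT.
  case: (eqVneq u v) => [->|huv] //= h1 h2.
  have hvw : v != w by rewrite eq_sym.
  have := Hd u v w huv huw hvw.
  rewrite le_max => /orP[] h.
    by apply: le_trans h1; apply: le_floor; apply: ler_wpM2l.
  by apply: le_trans h2; rewrite [zz w v]zzC; apply: le_floor; apply: ler_wpM2l.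
pose rep L u := odflt u [pick w | Rel L u w].
have Hrep L u v : (rep L u == rep L v) = Rel L u v.
  by apply: rep_spec => //; [exact: Hsym | exact: Htr].
pose Pr (u : 'I_n) : {poly R} := \poly_(j < (2 * M).+1) ((rep j.+1 u : nat)%:R).
pose y (s : pairs n) := phi (2 * N) (2 * M) (Yof Pr s).
pose w (s : pairs n) : rat := (z s)%:~R / N%:R.
exists (fun s => ratr (w s)); split; last first.
  move=> s; rewrite /w fmorph_div rmorph_int rmorph_nat.
  have hz1 := floor_le (N%:R * d s); have hz2 := floorD1_gt (N%:R * d s).
  rewrite -/(z s) in hz1 hz2; rewrite intrD in hz2.
  have hNr : (0 : R) < N%:R by rewrite ltr0n.
  have E : d s - (z s)%:~R / N%:R = (N%:R * d s - (z s)%:~R) / N%:R.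
    by field; rewrite lt0r_neq0.
  rewrite E ger0_norm; last by rewrite divr_ge0 ?subr_ge0 // ltW.
  rewrite ltr_pdivrMr //; set Z := (z s)%:~R in hz1 hz2 *; lra.
exists y; split.
  split; first by move=> s; apply: phi_puiseux.
  move=> p Hp.
  rewrite (@evalK_phi R (2 * N) n y (2 * M) (Yof Pr) p (\sum_(t <- p) degc (2 * M) t.2)) //.
    by rewrite Qpoly_zero ?all_le_sum // phi_poly0.
  exact: all_le_sum.
exists w; split => // s.
pose a := (val s).1; pose b := (val s).2.
have hab : (a < b)%N by exact: (valP s).
have hab' : a != b by rewrite neq_ltn hab.
have Hs : val s = spair a b.
  by rewrite /spair hab /a /b; case: (val s).
have Hzz : zz a b = z s := zzs a b s Hs hab'.
pose kk := `|M%:Z - z s|%N.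
pose Del := map_poly (real_complex R) (Pr a - Pr b).
have Hcoef j : (j < (2 * M).+1)%N ->
    Del`_j = (((rep j.+1 a : nat)%:R - (rep j.+1 b : nat)%:R : R))%:C%C.
  by move=> hj; rewrite coef_map /= coefB !coef_poly hj.
have hzs := hzM s.
have Hlow j : (j < kk)%N -> Del`_j = 0.
  move=> hj; rewrite Hcoef; last by rewrite /kk in hj; lia.
  have : Rel j.+1 a b by rewrite /Rel Hzz; apply/orP; right; rewrite /kk in hj; lia.
  by rewrite -Hrep => /eqP ->; rewrite subrr.
have Hnz : Del`_kk != 0.
  rewrite Hcoef; last by rewrite /kk; lia.
  have : ~~ Rel kk.+1 a b by rewrite /Rel Hzz negb_or hab' /= /kk; lia.
  rewrite -Hrep; apply: contra => /eqP H; apply/eqP/val_inj/eqP.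
  move/complexI: H => /eqP; rewrite subr_eq0 eqr_nat.
  done.
have L1 := @phi_LB R (2 * N) M Del kk hN2 Hlow.
have L2 := mulPS_LB L1 L1.
rewrite phi_mul // addnn -mul2n in L2.
have Hw : eD (2 * N) M kk + eD (2 * N) M kk = - w s.
  have Hk : (kk%:R : rat) = M%:R - (z s)%:~R.
    rewrite /kk natr_absz ger0_norm; last by lia.
    by rewrite intrB.
  rewrite /eD Hk /w natrM.
  have hN0 : (N%:R : rat) != 0 by rewrite pnatr_eq0 -lt0n.
  by field.
case: L2 => L2a L2b; split.
  by rewrite /y -Hw L2b mulf_neq0.
by move=> r Hr; rewrite -Hw; apply: L2a.
Qed.

Theorem proposition2p1 (R : realType) (n : nat) :
  (2 <= n)%N -> trop (@CM R n) = @U R n.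
Proof.
move=> _; apply/seteqP; split; first exact: trop_sub_U.
by move=> d Hd; apply: U_sub_trop.
Qed.
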